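(* Let $R$ be a commutative Noetherian ring and $M$ an Artinian $R$-module. Then $\operatorname{Supp}_RM\subseteq\operatorname{Cos}_RM$. In particular, $\operatorname{Cos}_RM\cap V(J(M))=\operatorname{Supp}_RM$.
   Context: $\operatorname{Cos}_RM=\{\mathfrak{p}\in\operatorname{Spec}R:\operatorname{Hom}_R(R_{\mathfrak{p}},M)\neq0\}$. For Artinian $M$, $\operatorname{Supp}_RM$ is a finite set of maximal ideals and $J(M)=\bigcap_{\mathfrak{m}\in\operatorname{Supp}_RM}\mathfrak{m}$. *)

(* Defs.v *)
From mathcomp Require Import all_boot all_algebra.
Set Implicit Arguments. Unset Strict Implicit. Unset Printing Implicit Defensive.
Import GRing.Theory.
Local Open Scope ring_scope.

Section Defs.
Variable R : comNzRingType.

Definition is_ideal (I : R -> Prop) : Prop :=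
  I 0 /\ (forall x y, I x -> I y -> I (x + y)) /\ (forall r x, I x -> I (r * x)).

Definition is_prime_ideal (p : R -> Prop) : Prop :=
  is_ideal p /\ ~ p 1 /\ (forall a b, p (a * b) -> p a \/ p b).

Definition noetherian_ring : Prop :=
  forall I : nat -> R -> Prop, (forall n, is_ideal (I n)) ->
    (forall n x, I n x -> I n.+1 x) ->
    exists n0, forall n, (n0 <= n)%N -> forall x, I n x -> I n0 x.

Variable M : lmodType R.

Definition is_submodule (N : M -> Prop) : Prop :=
  N 0 /\ (forall x y, N x -> N y -> N (x + y)) /\ (forall r x, N x -> N (r *: x)).

Definition artinian_module : Prop :=
  forall N : nat -> M -> Prop, (forall n, is_submodule (N n)) ->
    (forall n x, N n.+1 x -> N n x) ->
    exists n0, forall n, (n0 <= n)%N -> forall x, N n0 x -> N n x.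

(* Localization at p: elements of R_p (resp. M_p) are fractions r/s with s
   outside p, where r/s = r'/s' iff u(s' r - s r') = 0 for some u outside p. *)
Definition frac_eq (p : R -> Prop) (r1 s1 r2 s2 : R) : Prop :=
  exists u, ~ p u /\ u * (s2 * r1 - s1 * r2) = 0.

(* an R-linear map R_p -> M, given on representatives (r, s), s outside p:
   well defined on classes, additive for fraction addition, and R-linear *)
Definition hom_loc (p : R -> Prop) (f : R -> R -> M) : Prop :=
  (forall r1 s1 r2 s2, ~ p s1 -> ~ p s2 -> frac_eq p r1 s1 r2 s2 ->
     f r1 s1 = f r2 s2) /\
  (forall r1 s1 r2 s2, ~ p s1 -> ~ p s2 ->
     f (s2 * r1 + s1 * r2) (s1 * s2) = f r1 s1 + f r2 s2) /\
  (forall a r s, ~ p s -> f (a * r) s = a *: f r s).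

(* Cos_R M : primes p with Hom_R(R_p, M) <> 0 *)
Definition in_Cos (p : R -> Prop) : Prop :=
  is_prime_ideal p /\
  exists f, hom_loc p f /\ exists r s, ~ p s /\ f r s <> 0.

(* Supp_R M : primes p with M_p <> 0, i.e. some fraction m/s is nonzero,
   where m/s = 0 in M_p iff u *: m = 0 for some u outside p *)
Definition in_Supp (p : R -> Prop) : Prop :=
  is_prime_ideal p /\
  exists (m : M) (s : R), ~ p s /\ ~ (exists u, ~ p u /\ u *: m = 0).

(* J(M) = intersection of the (maximal) ideals in Supp_R M *)
Definition JM : R -> Prop := fun x => forall q, in_Supp q -> q x.

Definition in_V (I : R -> Prop) (p : R -> Prop) : Prop :=
  is_prime_ideal p /\ forall x, I x -> p x.

End Defs.

(* Main.v *)
Require Import Defs.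
From mathcomp Require Import all_boot all_algebra.
From mathcomp Require Import ring.
From Stdlib Require Import Classical ClassicalEpsilon.
Set Implicit Arguments. Unset Strict Implicit. Unset Printing Implicit Defensive.
Import GRing.Theory.
Local Open Scope ring_scope.

Lemma pr_mul (R : comNzRingType) (p : R -> Prop) a b :
  is_prime_ideal p -> ~ p a -> ~ p b -> ~ p (a * b).
Proof. by move=> [_ [_ H]] ha hb /H []. Qed.

Lemma pr_1 (R : comNzRingType) (p : R -> Prop) : is_prime_ideal p -> ~ p 1.
Proof. by case=> _ []. Qed.

Lemma pr_exp (R : comNzRingType) (p : R -> Prop) a k :
  is_prime_ideal p -> ~ p a -> ~ p (a ^+ k).
Proof.
move=> hp ha; elim: k => [|k IH]; first by rewrite expr0; apply: pr_1.
by rewrite exprS; apply: pr_mul.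
Qed.

Lemma id_mull (R : comNzRingType) (p : R -> Prop) a b :
  is_prime_ideal p -> p a -> p (b * a).
Proof. by case=> [[_ [_ H]] _] ha; apply: H. Qed.

Lemma id_mulr (R : comNzRingType) (p : R -> Prop) a b :
  is_prime_ideal p -> p a -> p (a * b).
Proof. by move=> hp ha; rewrite mulrC; apply: id_mull. Qed.

Lemma id_add (R : comNzRingType) (p : R -> Prop) a b :
  is_prime_ideal p -> p a -> p b -> p (a + b).
Proof. by case=> [[_ [H _]] _]; apply: H. Qed.

Lemma divisible_elt (R : comNzRingType) (M : lmodType R) (p : R -> Prop) (m : M) :
  is_prime_ideal p -> artinian_module M ->
  (forall u, ~ p u -> u *: m <> 0) ->
  exists t, ~ p t /\ forall s, ~ p s -> exists b, (s * b) *: (t *: m) = t *: m.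
Proof.
move=> hp hA hm.
apply: NNPP => HN.
have HN' : forall t, ~ p t -> exists s, ~ p s /\ forall b, (s * b) *: (t *: m) <> t *: m.
  move=> t ht; apply: NNPP => H1; apply: HN; exists t; split => // s hs.
  apply: NNPP => H2; apply: H1; exists s; split => // b hb; apply: H2; by exists b.
pose sf t := epsilon (inhabits 0) (fun s => ~ p s /\ forall b, (s * b) *: (t *: m) <> t *: m).
have hsf : forall t, ~ p t -> ~ p (sf t) /\ forall b, (sf t * b) *: (t *: m) <> t *: m.
  by move=> t ht; apply: (epsilon_spec (inhabits 0) _ (HN' t ht)).
pose ts n := iter n (fun t => t * sf t) 1.
have hts : forall n, ~ p (ts n).
  elim=> [|n IH]; first exact: pr_1.
  by rewrite /ts iterS; apply: pr_mul => //; case: (hsf _ IH).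
pose N n (y : M) := exists c, y = (c * ts n) *: m.
have hsub : forall n, is_submodule (N n).
  move=> n; split; first by exists 0; rewrite mul0r scale0r.
  split.
    by move=> x y [c1 ->] [c2 ->]; exists (c1 + c2); rewrite mulrDl scalerDl.
  by move=> r x [c ->]; exists (r * c); rewrite scalerA mulrA.
have hdec : forall n x, N n.+1 x -> N n x.
  move=> n x [c ->]; exists (c * sf (ts n)).
  by rewrite /ts iterS -/(ts n); congr (_ *: _); ring.
have [n0 Hn0] := hA N hsub hdec.
have := Hn0 n0.+1 (leqnSn n0) (ts n0 *: m).
case; first by exists 1; rewrite mul1r.
move=> c; rewrite /ts iterS -/(ts n0) => E.
case: (hsf _ (hts n0)) => _ /(_ c); apply.
by rewrite scalerA E; congr (_ *: _); ring.
Qed.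

Lemma div_inj (R : comNzRingType) (M : lmodType R) (p : R -> Prop) (x : M) :
  (forall s, ~ p s -> exists b, (s * b) *: x = x) ->
  forall s c, ~ p s -> s *: (c *: x) = 0 -> c *: x = 0.
Proof.
move=> hd s c hs E; have [b hb] := hd s hs.
rewrite -hb scalerA.
have -> : c * (s * b) = b * (s * c) by ring.
by rewrite -scalerA -scalerA E scaler0.
Qed.

Definition gw (R : comNzRingType) (M : lmodType R) (q : R -> Prop) (w : M) :=
  (forall c, c *: w = 0 -> q c) /\ (forall a, q a -> exists k, a ^+ k *: w = 0) /\
  (forall s, ~ q s -> exists b, (s * b) *: w = w).

Lemma good_wit (R : comNzRingType) (M : lmodType R) (q : R -> Prop) :
  artinian_module M -> in_Supp M q -> exists w : M, gw q w.
Proof.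
move=> hA [hq [m [s0 [_ hm]]]].
have hm' : forall u, ~ q u -> u *: m <> 0 by move=> u hu E; apply: hm; exists u.
have [t [ht hd]] := divisible_elt hq hA hm'.
exists (t *: m); split; [|split] => //.
- move=> c; rewrite scalerA => E; apply: NNPP => hc.
  by apply: (hm' (c * t)) => //; apply: pr_mul.
- move=> a ha.
  pose N n (y : M) := exists c, y = (a ^+ n * c) *: (t *: m).
  have hsub : forall n, is_submodule (N n).
    move=> n; split; first by exists 0; rewrite mulr0 scale0r.
    split.
      by move=> x y [c1 ->] [c2 ->]; exists (c1 + c2); rewrite mulrDr scalerDl.
    by move=> r x [c ->]; exists (r * c); rewrite !scalerA; congr (_ *: _); ring.
  have hdec : forall n x, N n.+1 x -> N n x.
    move=> n x [c ->]; exists (a * c).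
    by rewrite exprS; congr (_ *: _); ring.
  have [n0 Hn0] := hA N hsub hdec.
  have := Hn0 n0.+1 (leqnSn n0) (a ^+ n0 *: (t *: m)).
  case; first by exists 1; rewrite mulr1.
  move=> c E; exists n0.
  have h1 : ~ q (1 - a * c).
    move=> h; apply: (pr_1 hq).
    have -> : (1 : R) = (1 - a * c) + c * a by ring.
    by apply: id_add => //; apply: id_mull.
  apply: (div_inj hd h1).
  rewrite scalerBl scale1r {1}E [(a * c) *: _]scalerA; apply/eqP; rewrite subr_eq0; apply/eqP.
  by congr (_ *: _); rewrite exprS; ring.
Qed.

Lemma supp_max (R : comNzRingType) (M : lmodType R) (q q' : R -> Prop) (w : M) :
  gw q w -> is_prime_ideal q' -> (forall z, q z -> q' z) -> forall a, q' a -> q a.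
Proof.
move=> [hann [_ hd]] hq' hsub a ha; apply: NNPP => hna.
have [b hb] := hd a hna.
have h1 : q (1 - a * b) by apply: hann; rewrite scalerBl scale1r hb subrr.
apply: (pr_1 hq').
have -> : (1 : R) = (1 - a * b) + b * a by ring.
by apply: id_add => //; [apply: hsub | apply: id_mull].
Qed.

Lemma supp_cos (R : comNzRingType) (M : lmodType R) (p : R -> Prop) :
  artinian_module M -> in_Supp M p -> in_Cos M p.
Proof.
move=> hA [hp [m [s0 [_ hm]]]].
have hm' : forall u, ~ p u -> u *: m <> 0 by move=> u hu E; apply: hm; exists u.
have [t [ht hd]] := divisible_elt hp hA hm'.
set x := t *: m in hd.
pose bf s := epsilon (inhabits 0) (fun b => (s * b) *: x = x).
have hb : forall s, ~ p s -> (s * bf s) *: x = x.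
  by move=> s hs; apply: (epsilon_spec (inhabits 0) _ (hd s hs)).
have inj := div_inj hd.
split => //; exists (fun r s => (r * bf s) *: x); split; last first.
  exists 1, 1; split; first exact: pr_1.
  by rewrite hb /x //; [apply: hm' | apply: pr_1].
split; [|split].
- move=> r1 s1 r2 s2 h1 h2 [u [hu E]].
  have hs : ~ p (u * s1 * s2) by apply: pr_mul => //; apply: pr_mul.
  apply/eqP; rewrite -subr_eq0 -scalerBl; apply/eqP.
  apply: (inj _ _ hs).
  have -> : (u * s1 * s2) *: ((r1 * bf s1 - r2 * bf s2) *: x) =
     (u * s2 * r1) *: ((s1 * bf s1) *: x) - (u * s1 * r2) *: ((s2 * bf s2) *: x).
    by rewrite !scalerA -scalerBl; congr (_ *: _); ring.
  rewrite !hb // -scalerBl.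
  have -> : u * s2 * r1 - u * s1 * r2 = u * (s2 * r1 - s1 * r2) by ring.
  by rewrite E scale0r.
- move=> r1 s1 r2 s2 h1 h2.
  have hs : ~ p (s1 * s2) by apply: pr_mul.
  rewrite -scalerDl; apply/eqP; rewrite -subr_eq0 -scalerBl; apply/eqP.
  apply: (inj _ _ hs).
  have -> : (s1 * s2) *: (((s2 * r1 + s1 * r2) * bf (s1 * s2) - (r1 * bf s1 + r2 * bf s2)) *: x)
     = (s2 * r1 + s1 * r2) *: ((s1 * s2 * bf (s1 * s2)) *: x) -
       ((s2 * r1) *: ((s1 * bf s1) *: x) + (s1 * r2) *: ((s2 * bf s2) *: x)).
    by rewrite !scalerA -scalerDl -scalerBl; congr (_ *: _); ring.
  by rewrite !hb // -scalerDl subrr.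
- by move=> a r s hs; rewrite scalerA mulrA.
Qed.

Lemma v_supp (R : comNzRingType) (M : lmodType R) (p : R -> Prop) :
  artinian_module M -> is_prime_ideal p -> (forall x, JM M x -> p x) -> in_Supp M p.
Proof.
move=> hA hp hJ; apply: NNPP => hnS.
have HnS : forall m : M, exists u, ~ p u /\ u *: m = 0.
  move=> m; apply: NNPP => h; apply: hnS; split => //; exists m, 1; split => //.
  exact: pr_1.
pose Qf (x : R) := epsilon (inhabits (fun _ : R => True)) (fun q => in_Supp M q /\ ~ q x).
have hQ : forall x, ~ p x -> in_Supp M (Qf x) /\ ~ Qf x x.
  move=> x hx; apply: (epsilon_spec (inhabits (fun _ : R => True)) (fun q => in_Supp M q /\ ~ q x)).
  apply: NNPP => h; apply: hx; apply: hJ => q hq; apply: NNPP => hqx.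
  by apply: h; exists q.
pose Wf (x : R) := epsilon (inhabits (0 : M)) (fun w => gw (Qf x) w).
have hW : forall x, ~ p x -> gw (Qf x) (Wf x).
  move=> x hx; apply: (epsilon_spec (inhabits (0 : M)) (fun w => gw (Qf x) w)).
  by apply: good_wit => //; case: (hQ x hx).
pose yf (x : R) := epsilon (inhabits 0) (fun y => Qf x y /\ ~ p y).
have hy : forall x, ~ p x -> Qf x (yf x) /\ ~ p (yf x).
  move=> x hx; apply: (epsilon_spec (inhabits 0) (fun y => Qf x y /\ ~ p y)).
  have [hann _] := hW x hx.
  have [u [hu E]] := HnS (Wf x).
  by exists u; split => //; apply: hann.
pose xs n := iter n (fun x => x * yf x) 1.
have hxs : forall n, ~ p (xs n).
  elim=> [|n IH]; first exact: pr_1.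
  by rewrite /xs iterS -/(xs n); apply: pr_mul => //; case: (hy _ IH).
have hprime : forall n, is_prime_ideal (Qf (xs n)).
  by move=> n; case: (hQ _ (hxs n)) => [[]].
have hlt : forall n j, (n < j)%N -> Qf (xs n) (xs j).
  move=> n; elim=> [//|j IH]; rewrite ltnS leq_eqVlt => /orP [/eqP <-|hnj].
    rewrite /xs iterS -/(xs n); apply: id_mull; first exact: hprime.
    by case: (hy _ (hxs n)).
  rewrite /xs iterS -/(xs j); apply: id_mulr; first exact: hprime.
  exact: IH.
have hz : forall n j, (n < j)%N -> exists z, Qf (xs j) z /\ ~ Qf (xs n) z.
  move=> n j hnj; apply: NNPP => h.
  have hsub : forall z, Qf (xs j) z -> Qf (xs n) z.
    by move=> z hz; apply: NNPP => hz'; apply: h; exists z.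
  have := supp_max (hW _ (hxs j)) (hprime n) hsub (hlt n j hnj).
  by case: (hQ _ (hxs j)).
pose N n (y : M) := forall P, is_submodule P -> (forall j, (n <= j)%N -> P (Wf (xs j))) -> P y.
have hsub : forall n, is_submodule (N n).
  move=> n; split; first by move=> P [h0 _].
  split.
    by move=> x y hx hy' P hP hj; case: (hP) => _ [hadd _]; apply: hadd; [apply: hx|apply: hy'].
  by move=> r x hx P hP hj; case: (hP) => _ [_ hsc]; apply: hsc; apply: hx.
have hdec : forall n x, N n.+1 x -> N n x.
  by move=> n x hx P hP hj; apply: hx => // j hj'; apply: hj; apply: ltnW.
have [n0 Hn0] := hA N hsub hdec.
have hN0 : N n0 (Wf (xs n0)) by move=> P _ hj; apply: hj.
have := Hn0 n0.+1 (leqnSn n0) (Wf (xs n0)) hN0.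
pose q := Qf (xs n0).
move=> H.
have hqp : is_prime_ideal q := hprime n0.
have [x [hx E]] : exists x, ~ q x /\ x *: Wf (xs n0) = 0.
  apply: (H (fun y => exists x, ~ q x /\ x *: y = 0)).
  - split; first by exists 1; split; [apply: (pr_1 hqp)|rewrite scaler0].
    split.
      move=> a b [x1 [h1 e1]] [x2 [h2 e2]]; exists (x1 * x2); split; first exact: pr_mul.
      have -> : (x1 * x2) *: (a + b) = x2 *: (x1 *: a) + x1 *: (x2 *: b).
        by rewrite scalerDr !scalerA [x2 * x1]mulrC.
      by rewrite e1 e2 !scaler0 addr0.
    move=> r a [x [h e]]; exists x; split => //.
    by rewrite scalerA mulrC -scalerA e scaler0.
  - move=> j hj.
    have [z [hzj hzn]] := hz n0 j hj.
    have [_ [hnil _]] := hW _ (hxs j).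
    have [k hk] := hnil z hzj.
    by exists (z ^+ k); split => //; apply: pr_exp.
apply: hx.
by have [hann _] := hW _ (hxs n0); apply: hann.
Qed.

Theorem lemma3p6 (R : comNzRingType) (M : lmodType R) :
  noetherian_ring R -> artinian_module M ->
  (forall p : R -> Prop, in_Supp M p -> in_Cos M p) /\
  (forall p : R -> Prop, (in_Cos M p /\ in_V (JM M) p) <-> in_Supp M p).
Proof.
move=> _ hA; split; first by move=> p; apply: supp_cos.
move=> p; split.
  by move=> [_ [hp hJ]]; apply: v_supp.
move=> hs; split; first exact: supp_cos.
by split; [case: hs | move=> x hx; apply: hx].
Qed.
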